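(* (1) If $p<m$, an element $w\in G(m,p,n)$ is regular if and only if there is an integer $r\ge1$ such that, with $g=\gcd(r,n)$, $w$ has exactly $g$ cycles, each of length $n/g$ and weight $r/g$ (mod $m$). (2) An element $w\in G(m,m,n)$ is regular if and only if there is an integer $r\ge1$ such that either (i) with $g=\gcd(r,n)$, $w$ has exactly $g$ cycles, each of length $n/g$ and weight $r/g$; or (ii) with $h=\gcd(r,n-1)$, $w$ has exactly $h+1$ cycles, of which $h$ have length $(n-1)/h$ and weight $r/h$, and the remaining one is a $1$-cycle of weight $-r$ (weights taken mod $m$).
   Context: Let $m,p,n$ be positive integers with $p\mid m$ and $\zeta=e^{2\pi i/m}$. $G(m,1,n)$ consists of pairs $w=[u;a]$, $u\in\mathfrak S_n$, $a\in(\mathbb Z/m\mathbb Z)^n$, identified with the monomial matrix with entry $\zeta^{a_i}$ in position $(u(i),i)$; it acts on $\mathbb C^n$. Cycles of $w$ are cycles of $u$ (fixed points included), and the weight of a cycle is the sum of $a_i$ over its elements, in $\mathbb Z/m\mathbb Z$. $G(m,p,n)$ is the subgroup of $w$ with $\sum_i a_i\equiv0\pmod p$. A reflection is an element whose fixed space in $\mathbb C^n$ has codimension $1$. An element $w$ of a complex reflection group $W$ is regular if it has an eigenvector $v\in\mathbb C^n$ that lies on no reflecting hyperplane of $W$ (i.e. $v\notin\operatorname{fix}(t)$ for every reflection $t\in W$). *)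

(* Defs.v *)
From HB Require Import structures.
From mathcomp Require Import all_boot all_order all_algebra all_fingroup all_field.
Set Implicit Arguments. Unset Strict Implicit. Unset Printing Implicit Defensive.
From mathcomp Require Import algC.
Import GRing.Theory Num.Theory.
Local Open Scope ring_scope.

(* An element w = [u; a] of G(m,1,n): u a permutation of {0..n-1},
   a : 'I_n -> Z/mZ (represented by 'I_m, m > 0). *)
Definition elt (m n : nat) := ({perm 'I_n} * {ffun 'I_n -> 'I_m})%type.

Definition eperm m n (w : elt m n) : {perm 'I_n} := w.1.
Definition ewt m n (w : elt m n) (i : 'I_n) : nat := w.2 i.

Definition inG (m p n : nat) (w : elt m n) : bool :=
  (p %| \sum_(i < n) ewt w i)%N.
Arguments inG m p n w : clear implicits.

Definition gmat (z : algC) m n (w : elt m n) : 'M[algC]_n :=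
  \matrix_(i, j) (if eperm w j == i then z ^+ ewt w j else 0).

(* fixed space of t (acting on column vectors) has codimension 1 *)
Definition is_reflection n (t : 'M[algC]_n) : Prop := \rank (t - 1%:M) = 1%N.

Definition regular (z : algC) (m p n : nat) (w : elt m n) : Prop :=
  exists (v : 'cV[algC]_n) (lam : algC),
    v != 0 /\ gmat z w *m v = lam *: v /\
    forall t : elt m n, inG m p n t -> is_reflection (gmat z t) ->
      gmat z t *m v != v.
Arguments regular z m p n w : clear implicits.

(* cycles of w = orbits of u (fixed points included); weight mod m *)
Definition cycles m n (w : elt m n) : {set {set 'I_n}} := porbits (eperm w).
Definition cweight m n (w : elt m n) (c : {set 'I_n}) : nat :=
  (\sum_(i in c) ewt w i)%N.

Definition cond_i (m n : nat) (w : elt m n) (r : nat) : Prop :=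
  let g := gcdn r n in
  #|cycles w| = g /\
  forall c, c \in cycles w -> (#|c| = n %/ g)%N /\ (cweight w c = r %/ g %[mod m])%N.

Definition cond_ii (m n : nat) (w : elt m n) (r : nat) : Prop :=
  let h := gcdn r n.-1 in
  #|cycles w| = h.+1 /\
  exists2 c0, c0 \in cycles w &
    [/\ #|c0| = 1%N, (cweight w c0 + r = 0 %[mod m])%N &
      forall c, c \in cycles w -> c != c0 ->
        (#|c| = n.-1 %/ h)%N /\ (cweight w c = r %/ h %[mod m])%N].

(* Main.v *)
Require Import Defs.
From HB Require Import structures.
From mathcomp Require Import all_boot all_order all_algebra all_fingroup all_field.
From mathcomp Require Import algC zify ring.
Set Implicit Arguments. Unset Strict Implicit. Unset Printing Implicit Defensive.
Import GRing.Theory Num.Theory.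
Local Open Scope ring_scope.


Lemma mulv_at m n z (w : elt m n) (v : 'cV[algC]_n) j :
  (gmat z w *m v) (eperm w j) 0 = z ^+ ewt w j * v j 0.
Proof.
rewrite !mxE (bigD1 j) //= mxE eqxx big1 ?addr0 // => i /negbTE ij.
by rewrite mxE (inj_eq perm_inj) ij mul0r.
Qed.

Lemma eigenP m n z (w : elt m n) (v : 'cV[algC]_n) lam :
  gmat z w *m v = lam *: v <->
  forall j, lam * v (eperm w j) 0 = z ^+ ewt w j * v j 0.
Proof.
split=> [E j|E].
  by rewrite -mulv_at E mxE.
apply/matrixP=> i k; rewrite (ord1 k) -(permKV (eperm w) i) mulv_at mxE.
by rewrite E.
Qed.

Lemma fixP m n z (w : elt m n) (v : 'cV[algC]_n) :
  gmat z w *m v = v <->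
  forall j, v (eperm w j) 0 = z ^+ ewt w j * v j 0.
Proof.
have H := eigenP z w v 1; rewrite scale1r in H.
split=> [/H E j|E]; first by rewrite -E mul1r.
by apply/H => j; rewrite mul1r.
Qed.

Lemma rank_colrow n (c : 'cV[algC]_n) (r : 'rV[algC]_n) :
  c *m r != 0 -> \rank (c *m r) = 1%N.
Proof.
move=> nz; apply/eqP; rewrite eqn_leq; apply/andP; split.
  by apply: leq_trans (mulmx_max_rank _ _) _; rewrite ?rank_leq_col // mxrank_leqif_sup.
by rewrite lt0n mxrank_eq0.
Qed.


Definition reflA m n (m_gt0 : (0 < m)%N) (j j' : 'I_n) (k : nat) : elt m n :=
  (tperm j j', [ffun i => if i == j then Ordinal (ltn_pmod k m_gt0)
     else if i == j' then Ordinal (ltn_pmod (m - k %% m) m_gt0)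
     else Ordinal m_gt0]).

Lemma ewt_reflA m n (m_gt0 : (0 < m)%N) (j j' : 'I_n) k i : j != j' ->
  ewt (reflA m_gt0 j j' k) i =
  if i == j then (k %% m)%N else if i == j' then ((m - k %% m) %% m)%N else 0%N.
Proof. by move=> jj; rewrite /ewt /reflA /= ffunE; case: ifP => //; case: ifP. Qed.

Lemma regular_neq m p n z (m_gt0 : (0 < m)%N) (zp : m.-primitive_root z)
   (pm : (p %| m)%N) (v : 'cV[algC]_n) :
  (forall t : elt m n, inG m p n t -> is_reflection (gmat z t) -> gmat z t *m v != v) ->
  forall j j' k, j != j' -> v j' 0 != z ^+ k * v j 0.
Proof.
move=> reg j j' k jj; apply/negP => /eqP E.
set t := reflA m_gt0 j j' k.
have zA : z ^+ (k %% m) = z ^+ k by rewrite (prim_expr_mod zp).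
have AB : z ^+ ((m - k %% m) %% m) * z ^+ (k %% m) = 1.
  by rewrite (prim_expr_mod zp) -exprD subnK ?(prim_expr_order zp) // ltnW ?ltn_pmod.
have j'j : j' != j by rewrite eq_sym.
have Hfix : gmat z t *m v = v.
  apply/fixP => i; rewrite !ewt_reflA //= /eperm /=.
  have [->|ij] := eqVneq i j; first by rewrite tpermL zA.
  have [->|ij'] := eqVneq i j'; first by rewrite tpermR E -zA mulrA AB mul1r.
  by rewrite tpermD 1?eq_sym // expr0 mul1r.
have Hin : inG m p n t.
  rewrite /inG (bigD1 j) //= (bigD1 j') //= big1 ?addn0; last first.
    by move=> i /andP[ij ij']; rewrite ewt_reflA // (negbTE ij) (negbTE ij').
  rewrite !ewt_reflA // eqxx (negbTE j'j) eqxx.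
  apply: dvdn_trans pm _; rewrite /dvdn.
  by rewrite modnDmr subnKC ?modnn // ltnW ?ltn_pmod.
have Hrk : is_reflection (gmat z t).
  rewrite /is_reflection.
  pose c : 'cV[algC]_n := \col_x (if x == j then -1 else if x == j' then z ^+ k else 0).
  pose r : 'rV[algC]_n := \row_y (if y == j then 1 else if y == j' then - z ^+ ((m - k %% m) %% m) else 0).
  have -> : gmat z t - 1%:M = c *m r.
    apply/matrixP => x y; rewrite !mxE big_ord1 !mxE !ewt_reflA // /eperm /=.
    have [->|yj] := eqVneq y j.
      rewrite tpermL mulr1 zA; have [->|xj] := eqVneq x j.
        by rewrite (negbTE j'j) sub0r.
      by rewrite subr0 eq_sym.
    have [->|yj'] := eqVneq y j'.
      rewrite tpermR.
      have [->|xj] := eqVneq x j; first by rewrite ?eqxx (negbTE jj) subr0 mulN1r opprK.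
      case: eqVneq => [Exj'|xj']; last by rewrite mul0r subr0.
      by rewrite sub0r -zA mulrN mulrC AB.
    rewrite tpermD 1?eq_sym // mulr0 expr0.
    by case: eqVneq => _; rewrite ?subrr ?subr0.
  apply: rank_colrow; apply/negP => /eqP/matrixP/(_ j j).
  rewrite !mxE big_ord1 !mxE eqxx mulr1 => /eqP; by rewrite oppr_eq0 oner_eq0.
by move: (reg t Hin Hrk); rewrite Hfix eqxx.
Qed.

Definition reflB m n (m_gt0 : (0 < m)%N) p (pm : (p < m)%N) (i0 : 'I_n) : elt m n :=
  (1%g, [ffun i => if i == i0 then Ordinal pm else Ordinal m_gt0]).

Lemma regular_nz m p n z (m_gt0 : (0 < m)%N) (zp : m.-primitive_root z)
   (p_gt0 : (0 < p)%N) (pm : (p < m)%N) (v : 'cV[algC]_n) :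
  (forall t : elt m n, inG m p n t -> is_reflection (gmat z t) -> gmat z t *m v != v) ->
  forall i0, v i0 0 != 0.
Proof.
move=> reg i0; apply/negP => /eqP E.
set t := reflB m_gt0 pm i0.
have ewtE i : ewt t i = if i == i0 then p else 0%N.
  by rewrite /ewt /t /reflB /= ffunE; case: ifP.
have zp1 : z ^+ p != 1.
  by rewrite -(expr0 z) (eq_prim_root_expr zp) mod0n modn_small // -lt0n.
have Hfix : gmat z t *m v = v.
  apply/fixP => i; rewrite ewtE /eperm /= perm1.
  by case: eqVneq => [->|_]; rewrite ?E ?mulr0 ?expr0 ?mul1r.
have Hin : inG m p n t.
  rewrite /inG (bigD1 i0) //= big1 ?addn0 ?ewtE ?eqxx //.
  by move=> i /negbTE ii; rewrite ewtE ii.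
have Hrk : is_reflection (gmat z t).
  rewrite /is_reflection.
  pose c : 'cV[algC]_n := \col_x (if x == i0 then z ^+ p - 1 else 0).
  pose r : 'rV[algC]_n := \row_y (if y == i0 then 1 else 0).
  have -> : gmat z t - 1%:M = c *m r.
    apply/matrixP => x y; rewrite !mxE big_ord1 !mxE !ewtE /eperm /= perm1.
    have [->|yi] := eqVneq y i0.
      by rewrite mulr1 eq_sym; case: eqVneq; rewrite ?subr0.
    by rewrite mulr0 expr0 eq_sym; case: eqVneq => _; rewrite ?subrr ?subr0.
  apply: rank_colrow; apply/negP => /eqP/matrixP/(_ i0 i0).
  by rewrite !mxE big_ord1 !mxE eqxx mulr1 => /eqP; rewrite subr_eq0 (negbTE zp1).
by move: (reg t Hin Hrk); rewrite Hfix eqxx.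
Qed.


Lemma crt_coprime (m L k : nat) : (0 < m)%N -> (0 < L)%N -> coprime k m ->
  exists j, (j = k %[mod m])%N /\ coprime j m /\ coprime j L.
Proof.
move=> m0 L0 km.
pose x := (\prod_(q <- primes L | ~~ (q %| k)) q)%N.
have x0 : (0 < x)%N.
  rewrite /x big_seq_cond; apply: (big_ind (fun y => 0 < y)%N) => //.
    by move=> a b a0 b0; rewrite muln_gt0 a0.
  by move=> q /andP[]; rewrite mem_primes => /and3P[/prime_gt0 ? _ _] _.
exists (k + m * x)%N.
have jm : (k + m * x = k %[mod m])%N by rewrite addnC mulnC modnMDl.
split=> //; split; first by rewrite -coprime_modl jm coprime_modl.
have j0 : (0 < k + m * x)%N by rewrite addn_gt0 muln_gt0 m0 x0 orbT.
rewrite coprime_has_primes //; apply/hasPn => q; rewrite mem_primes => /and3P[pq _ qL] /=.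
rewrite mem_primes pq j0 /=.
case: (boolP (q %| k)%N) => qk.
  rewrite dvdn_addr // Euclid_dvdM // negb_or; apply/andP; split.
    by rewrite -prime_coprime // (coprime_dvdl qk).
  rewrite Euclid_dvd_prod // big_has_cond; apply/hasPn => i; rewrite mem_primes => /and3P[pi _ _] /=.
  apply/negP => /andP[ik qi]; move: qi; rewrite dvdn_prime2 // => /eqP qi.
  by move: ik; rewrite -qi qk.
rewrite dvdn_addl // dvdn_mull // Euclid_dvd_prod // big_has_cond; apply/hasP.
by exists q; rewrite ?mem_primes ?pq ?L0 ?qL //= qk dvdnn.
Qed.

Lemma root_lift (m L : nat) (z : algC) : (0 < m)%N -> (0 < L)%N ->
  m.-primitive_root z -> exists eta : algC, (m * L).-primitive_root eta /\ eta ^+ L = z.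
Proof.
move=> m0 L0 zp.
have mL0 : (0 < m * L)%N by rewrite muln_gt0 m0 L0.
have [theta thp] := C_prim_root_exists mL0.
have thL : m.-primitive_root (theta ^+ L).
  by have := exp_prim_root thp L; rewrite gcdnMl mulnK.
have [k zk] := prim_rootP thL (prim_expr_order zp).
have km : coprime k m by rewrite -(prim_root_exp_coprime _ thL) -zk.
have [j [jk [jm jL]]] := crt_coprime m0 L0 km.
exists (theta ^+ j); split.
  by rewrite prim_root_exp_coprime // coprimeMr jm jL.
by rewrite -exprM mulnC exprM -(prim_expr_mod thL) jk (prim_expr_mod thL) zk.
Qed.


Definition Sw m n (w : elt m n) x t := (\sum_(s < t) ewt w (iter s (eperm w) x))%N.

Lemma orbit_eq m n z (w : elt m n) (v : 'cV[algC]_n) lam :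
 (forall j, lam * v (eperm w j) 0 = z ^+ ewt w j * v j 0) ->
 forall t x, lam ^+ t * v (iter t (eperm w) x) 0 = z ^+ Sw w x t * v x 0.
Proof.
move=> E; elim=> [|t IH] x; first by rewrite /Sw big_ord0 !expr0 !mul1r.
rewrite /Sw big_ord_recr /= exprSr -mulrA E mulrCA IH mulrA -exprD addnC.
by [].
Qed.

Lemma sum_traject n (F : 'I_n -> nat) f x L :
  (\sum_(i <- traject f x L) F i = \sum_(s < L) F (iter s f x))%N.
Proof.
elim: L x => [|L IH] x; first by rewrite big_nil big_ord0.
by rewrite trajectS big_cons big_ord_recl IH /=; congr (_ + _)%N; apply: eq_bigr => i _; rewrite /bump /= -iterSr.
Qed.

Lemma cweightE m n (w : elt m n) x :
  cweight w (porbit (eperm w) x) = Sw w x #|porbit (eperm w) x|.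
Proof.
rewrite /cweight (eq_bigl (mem (traject (eperm w) x #|porbit (eperm w) x|))).
  by rewrite -big_uniq ?uniq_traject_porbit // sum_traject.
by move=> i; rewrite /= porbit_traject.
Qed.

Lemma iter_neq n (u : {perm 'I_n}) x t : (0 < t < #|porbit u x|)%N -> iter t u x != x.
Proof.
move=> /andP[t0 tL].
have L0 : (0 < #|porbit u x|)%N by apply: leq_trans tL.
rewrite -(nth_traject _ tL x); rewrite -[X in _ != X](nth_traject u L0 x) /=.
rewrite nth_uniq ?size_traject ?uniq_traject_porbit //.
by rewrite -lt0n.
Qed.

Lemma iter_L n (u : {perm 'I_n}) x : iter #|porbit u x| u x = x.
Proof. exact: iter_porbit. Qed.

Lemma porbit_iter n (u : {perm 'I_n}) x t : porbit u (iter t u x) = porbit u x.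
Proof. by rewrite -permX porbit_perm. Qed.


Section OnlyIf.
Variables (m n : nat) (z : algC) (w : elt m n) (v : 'cV[algC]_n) (lam : algC).
Hypothesis m0 : (0 < m)%N.
Hypothesis zp : m.-primitive_root z.
Hypothesis E : forall j, lam * v (eperm w j) 0 = z ^+ ewt w j * v j 0.
Hypothesis H1 : forall j j' k, j != j' -> v j' 0 != z ^+ k * v j 0.
Local Notation u := (eperm w).

Lemma per_a x : v x 0 != 0 -> lam ^+ #|porbit u x| = z ^+ cweight w (porbit u x).
Proof.
move=> vx; apply: (mulIf vx); rewrite cweightE -(orbit_eq E).
by rewrite iter_L.
Qed.

Lemma per_b x t : v x 0 != 0 -> (0 < t < #|porbit u x|)%N -> lam ^+ (t * m) != 1.
Proof.
move=> vx tL; apply/negP => /eqP H; rewrite exprM in H.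
have [k Hk] := prim_rootP zp H.
have Ey := orbit_eq E t x; rewrite Hk in Ey.
have xy : x != iter t u x by rewrite eq_sym iter_neq.
have := H1 ((m - k) + Sw w x t)%N xy => /negP; apply.
apply/eqP; rewrite exprD -mulrA -Ey mulrA -exprD subnK ?(prim_expr_order zp) ?mul1r //.
exact: ltnW.
Qed.

Lemma lamLm x : v x 0 != 0 -> lam ^+ (#|porbit u x| * m) = 1.
Proof.
move=> vx; rewrite exprM per_a //.
by rewrite -exprM mulnC exprM (prim_expr_order zp) expr1n.
Qed.

Lemma not_lt x y : v x 0 != 0 -> v y 0 != 0 -> ~ (#|porbit u x| < #|porbit u y|)%N.
Proof.
move=> vx vy lt; have := per_b vy (t := #|porbit u x|).
rewrite (lamLm vx) eqxx lt lt0n card_porbit_neq0.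
by move=> /(_ isT).
Qed.

Lemma same_len x y : v x 0 != 0 -> v y 0 != 0 -> #|porbit u x| = #|porbit u y|.
Proof.
move=> vx vy; apply/eqP; rewrite eqn_leq; apply/andP; split; rewrite leqNgt; apply/negP.
  exact: (not_lt vy vx).
exact: (not_lt vx vy).
Qed.

Lemma structure x0 : v x0 0 != 0 ->
  exists (L e : nat), [/\ (0 < L)%N, (0 < e)%N, coprime e L &
    forall x, v x 0 != 0 -> #|porbit u x| = L /\ (cweight w (porbit u x) = e %[mod m])%N].
Proof.
move=> vx0; set L := #|porbit u x0|.
have L0 : (0 < L)%N by rewrite lt0n card_porbit_neq0.
have [eta [etap etaL]] := root_lift m0 L0 zp.
have lmL : lam ^+ (m * L) = 1 by rewrite mulnC (lamLm vx0).
have [e0 He0] := prim_rootP etap lmL.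
set e := (e0 + m * L)%N.
have He : lam = eta ^+ e by rewrite He0 exprD (prim_expr_order etap) mulr1.
exists L, e; split => //.
- by rewrite /e addn_gt0 muln_gt0 m0 L0 orbT.
- rewrite /coprime; apply/negPn/negP => d1.
  set d := gcdn e L in d1.
  have d0 : (0 < d)%N by rewrite gcdn_gt0 L0 orbT.
  have dL : (d %| L)%N := dvdn_gcdr e L.
  have de : (d %| e)%N := dvdn_gcdl e L.
  have d2 : (1 < d)%N by rewrite ltn_neqAle eq_sym d1 d0.
  have := per_b vx0 (t := (L %/ d)%N).
  rewrite divn_gt0 // dvdn_leq //= ltn_Pdiv // => /(_ isT); apply/negP; apply/negPn/eqP.
  have key : forall a b, e = (a * d)%N -> L = (b * d)%N -> (e * (b * m) = a * (m * L))%N.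
    by move=> a b -> ->; lia.
  rewrite He -exprM (key (e %/ d) (L %/ d))%N ?divnK //.
  by rewrite mulnC exprM (prim_expr_order etap) expr1n.
- move=> x vx; have Lx := same_len vx vx0; split => //.
  apply/eqP; rewrite -(eq_prim_root_expr zp) -(per_a vx) Lx He -etaL -!exprM mulnC.
  by [].
Qed.

End OnlyIf.


Lemma cancel_mod (s L a b : nat) : coprime s L -> (a < L)%N -> (b < L)%N ->
  (s * a = s * b %[mod L])%N -> a = b.
Proof.
wlog le : a b / (a <= b)%N.
  move=> H sL aL bL E; case: (leqP a b) => ab; first exact: H.
  by symmetry; apply: H => //; exact: ltnW.
move=> sL aL bL /eqP E; apply/eqP; rewrite eqn_leq le /=.
move: E; rewrite eq_sym eqn_mod_dvd ?leq_mul2l ?le ?orbT // -mulnBr Gauss_dvdr.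
  case: (posnP (b - a)) => [/eqP|p0]; first by rewrite subn_eq0.
  by move/dvdn_leq => /(_ p0) H; move: (leq_ltn_trans (leq_subr a b) bL); rewrite ltnNge H.
by rewrite coprime_sym.
Qed.

Lemma norm_root (k : nat) (x : algC) : (0 < k)%N -> x ^+ k = 1 -> `|x| = 1.
Proof.
move=> k0 xk; apply/eqP; rewrite -(pexpr_eq1 k0) ?normr_ge0 //.
by rewrite -normrX xk normr1.
Qed.

Section Build.
Variables (m n : nat) (z : algC) (w : elt m n).
Hypothesis m0 : (0 < m)%N.
Hypothesis zp : m.-primitive_root z.
Variables (L s : nat) (Z : {set 'I_n}).
Hypothesis L0 : (0 < L)%N.
Hypothesis sL : coprime s L.
Hypothesis HZ : forall j, j \notin Z ->
  #|porbit (eperm w) j| = L /\ (cweight w (porbit (eperm w) j) = s %[mod m])%N.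
Hypothesis HZf : forall j, j \in Z -> eperm w j = j.
Variable eta : algC.
Hypothesis etap : (m * L).-primitive_root eta.
Hypothesis etaL : eta ^+ L = z.
Local Notation u := (eperm w).
Local Notation lam := (eta ^+ s).

Definition rep (j : 'I_n) : 'I_n := odflt j [pick k in porbit u j].

Lemma rep_in j : rep j \in porbit u j.
Proof. by rewrite /rep; case: pickP => //= /(_ j); rewrite porbit_id. Qed.

Lemma rep_eq j j' : porbit u j = porbit u j' -> rep j = rep j'.
Proof.
move=> E; rewrite /rep E; case: pickP => //= H.
by move: (H j); rewrite -E porbit_id.
Qed.

Lemma porbit_rep j : porbit u (rep j) = porbit u j.
Proof. by apply/eqP; rewrite eq_porbit_mem rep_in. Qed.

Lemma rep_u j : rep (u j) = rep j.
Proof. by apply: rep_eq; have := porbit_perm u 1 j; rewrite expg1. Qed.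

Definition tau j := index j (traject u (rep j) L).

Lemma card_rep j : j \notin Z -> #|porbit u (rep j)| = L.
Proof. by move=> jZ; rewrite porbit_rep; case: (HZ jZ). Qed.

Lemma uniq_rep j : j \notin Z -> uniq (traject u (rep j) L).
Proof. by move=> jZ; rewrite -(card_rep jZ) uniq_traject_porbit. Qed.

Lemma in_traj j : j \notin Z -> j \in traject u (rep j) L.
Proof.
by move=> jZ; rewrite -(card_rep jZ) -porbit_traject porbit_rep porbit_id.
Qed.

Lemma tau_lt j : j \notin Z -> (tau j < L)%N.
Proof. by move=> jZ; rewrite /tau -{2}(size_traject u (rep j) L) index_mem in_traj. Qed.

Lemma iter_tau j : j \notin Z -> iter (tau j) u (rep j) = j.
Proof.
by move=> jZ; rewrite -(nth_traject u (tau_lt jZ)) nth_index // in_traj.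
Qed.

Lemma notZ_u j : j \notin Z -> u j \notin Z.
Proof.
move=> jZ; apply/negP => ujZ; have E := perm_inj (HZf ujZ).
by rewrite E in ujZ; rewrite ujZ in jZ.
Qed.

Definition vv : 'cV[algC]_n := \col_j (if j \in Z then 0 else
   2%:R ^+ rep j * (z ^+ Sw w (rep j) (tau j) / lam ^+ tau j)).

Lemma z_neq0 : z != 0.
Proof.
apply/negP => /eqP z0; move: (prim_expr_order zp); rewrite z0 expr0n gtn_eqF //.
by move/eqP; rewrite eq_sym oner_eq0.
Qed.

Lemma eta_neq0 : eta != 0.
Proof.
apply/negP => /eqP e0; move: (prim_expr_order etap); rewrite e0 expr0n.
by rewrite muln_eq0 gtn_eqF // gtn_eqF // => /eqP; rewrite eq_sym oner_eq0.
Qed.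

Lemma lam_neq0 : lam != 0.
Proof. by rewrite expf_neq0 // eta_neq0. Qed.

Lemma lamL : lam ^+ L = z ^+ s.
Proof. by rewrite -etaL -!exprM mulnC. Qed.

Lemma vv_eig j : lam * vv (u j) 0 = z ^+ ewt w j * vv j 0.
Proof.
have ln0 := lam_neq0.
rewrite !mxE; case: (boolP (j \in Z)) => jZ.
  by rewrite (HZf jZ) jZ !mulr0.
rewrite (negbTE (notZ_u jZ)) rep_u.
have tL := tau_lt jZ; have itj := iter_tau jZ.
set x := rep j in itj *; set t := tau j in tL itj *.
case: (ltnP t.+1 L) => [lt|ge].
  have -> : tau (u j) = t.+1.
    rewrite /tau rep_u -/x -itj -iterS -(nth_traject u lt x) index_uniq //.
      by rewrite size_traject.
    exact: uniq_rep.
  rewrite /Sw big_ord_recr /= itj exprD exprS.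
  field.
  by rewrite ln0 /= expf_neq0.
have tL1 : t.+1 = L by apply/eqP; rewrite eqn_leq tL ge.
have ujx : u j = x.
  by rewrite -itj -iterS tL1 -(card_rep jZ) iter_L.
have -> : tau (u j) = 0%N.
  rewrite /tau rep_u -/x ujx; case: (L) L0 => // L' _.
  by rewrite trajectS /= eqxx.
have key : z ^+ ewt w j * z ^+ Sw w x t = lam ^+ t.+1.
  rewrite -exprD addnC -itj.
  have -> : (Sw w x t + ewt w (iter t u x) = Sw w x t.+1)%N by rewrite /Sw big_ord_recr.
  rewrite tL1 lamL -(card_rep jZ) -cweightE.
  apply/eqP; rewrite (eq_prim_root_expr zp) porbit_rep; apply/eqP.
  by case: (HZ jZ).
have -> : Sw w x 0 = 0%N by rewrite /Sw big_ord0.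
rewrite [RHS]mulrCA [z ^+ ewt w j * (_ * _)]mulrA key exprS.
field.
by rewrite expf_neq0.
Qed.

Lemma vv_eq0 j : (vv j 0 == 0) = (j \in Z).
Proof.
rewrite mxE; case: (boolP (j \in Z)) => jZ; first by rewrite eqxx.
rewrite !mulf_eq0 !expf_eq0 invr_eq0 !expf_eq0 (negbTE z_neq0) (negbTE eta_neq0).
by rewrite pnatr_eq0 !andbF.
Qed.

Lemma norm_A j : `|z ^+ Sw w (rep j) (tau j) / lam ^+ tau j| = 1.
Proof.
have nz : `|z| = 1 by apply: (norm_root m0); exact: prim_expr_order.
have ne : `|eta| = 1.
  by apply: (@norm_root (m * L)); [rewrite muln_gt0 m0 | exact: prim_expr_order].
by rewrite normf_div !normrX nz ne !expr1n divr1.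
Qed.

Lemma vv_pair j j' k : j \notin Z -> j' \notin Z -> j != j' ->
  vv j' 0 != z ^+ k * vv j 0.
Proof.
move=> jZ j'Z jj; apply/negP => /eqP E.
have nz : `|z| = 1 by apply: (norm_root m0); exact: prim_expr_order.
have Hr : rep j' = rep j.
  have := congr1 (fun x => `|x|) E; rewrite !mxE (negbTE jZ) (negbTE j'Z) /=.
  rewrite [in X in X -> _]normrM [in X in _ = X -> _]normrM [in X in _ = X -> _]normrM !norm_A; rewrite !mulr1 !normrX nz expr1n mul1r normr_nat -!natrX.
  by move/eqP; rewrite eqr_nat => /eqP /expnI H; apply: val_inj; apply: H.
have n2 : (2%:R : algC) ^+ rep j != 0 by rewrite expf_neq0 // pnatr_eq0.
move: E; rewrite !mxE (negbTE jZ) (negbTE j'Z) Hr [RHS]mulrCA => E1; have E := mulfI n2 E1.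
have zm a : (z ^+ a) ^+ m = 1 by rewrite -exprM mulnC exprM (prim_expr_order zp) expr1n.
have := congr1 (fun x => x ^+ m) E; rewrite /= !exprMn !zm !mul1r !exprVn => /invr_inj.
rewrite -!exprM => /eqP; rewrite (eq_prim_root_expr etap).
have ar a : (s * a * m = m * (s * a))%N by rewrite mulnC.
rewrite !ar -!muln_modr eqn_pmul2l //.
move=> /eqP/cancel_mod => /(_ sL (tau_lt j'Z) (tau_lt jZ)) Ht.
by move: jj; rewrite -(iter_tau jZ) -(iter_tau j'Z) Hr Ht eqxx.
Qed.

End Build.


Lemma build_ex m n z (w : elt m n) (m0 : (0 < m)%N) (zp : m.-primitive_root z)
  (L s : nat) (Z : {set 'I_n}) : (0 < L)%N -> coprime s L ->
  (forall j, j \notin Z ->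
    #|porbit (eperm w) j| = L /\ (cweight w (porbit (eperm w) j) = s %[mod m])%N) ->
  (forall j, j \in Z -> eperm w j = j) ->
  exists (v : 'cV[algC]_n) (lam : algC),
    [/\ (forall j, lam * v (eperm w j) 0 = z ^+ ewt w j * v j 0),
        (forall j, (v j 0 == 0) = (j \in Z)) &
        (forall j j' k, j \notin Z -> j' \notin Z -> j != j' -> v j' 0 != z ^+ k * v j 0)].
Proof.
move=> L0 sL HZ HZf.
have [eta [etap etaL]] := root_lift m0 L0 zp.
exists (vv z w L s Z eta), (eta ^+ s); split.
- exact: (vv_eig m0 zp L0 HZ HZf etap etaL).
- exact: (vv_eq0 w m0 zp s Z L0 etap).
- move=> j j' k; exact: (vv_pair m0 zp L0 sL HZ etap).
Qed.

Lemma regular_of m p n z (w : elt m n) (m0 : (0 < m)%N) (zp : m.-primitive_root z)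
  (Z : {set 'I_n}) (v : 'cV[algC]_n) lam :
  (exists j, j \notin Z) ->
  (forall j, lam * v (eperm w j) 0 = z ^+ ewt w j * v j 0) ->
  (forall j, (v j 0 == 0) = (j \in Z)) ->
  (forall j j' k, j \notin Z -> j' \notin Z -> j != j' -> v j' 0 != z ^+ k * v j 0) ->
  (forall a b, a \in Z -> b \in Z -> a = b) ->
  (forall t : elt m n, inG m p n t -> (forall i, i \notin Z -> ewt t i = 0%N) ->
     forall i, ewt t i = 0%N) ->
  regular z m p n w.
Proof.
move=> [j0 j0Z] eig zer pair Z1 triv.
have zn0 : forall a, z ^+ a != 0.
  move=> a; apply: expf_neq0; apply/negP => /eqP z0.
  by move: (prim_expr_order zp); rewrite z0 expr0n gtn_eqF // => /eqP; rewrite eq_sym oner_eq0.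
exists v, lam; split.
  apply/negP => /eqP v0; move: (zer j0); rewrite v0 mxE eqxx => E.
  by rewrite -E in j0Z.
split; first exact/eigenP.
move=> t tG tR; apply/negP => /eqP /fixP fx.
have [ut1|utn1] := eqVneq (eperm t) 1%g.
  have a0 : forall i, ewt t i = 0%N.
    apply: triv => // i iZ; have := fx i; rewrite ut1 perm1 => E.
    have vi : v i 0 != 0 by rewrite zer.
    have : z ^+ ewt t i == z ^+ 0.
      by rewrite expr0; apply/eqP; apply: (mulIf vi); rewrite -E mul1r.
    rewrite (eq_prim_root_expr zp) mod0n modn_small ?ltn_ord // => /eqP.
    by [].
  have g1 : gmat z t = 1%:M.
    apply/matrixP => x y; rewrite !mxE ut1 perm1 a0 expr0.
    by rewrite eq_sym; case: eqP.
  by move: tR; rewrite /is_reflection g1 subrr mxrank0.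
have [i ui] : exists i, eperm t i != i.
  apply/existsP; apply: contraR utn1 => /existsPn H; apply/eqP/permP => i.
  by rewrite perm1; apply/eqP; move: (H i); rewrite negbK.
have E := fx i.
case: (boolP (i \in Z)) => iZ.
  have : v i 0 == 0 by rewrite zer.
  move/eqP => vi; rewrite vi mulr0 in E.
  have : eperm t i \in Z by rewrite -zer E.
  by move=> /(Z1 _ _ iZ) H; rewrite -H eqxx in ui.
case: (boolP (eperm t i \in Z)) => jZ.
  have : v (eperm t i) 0 == 0 by rewrite zer.
  rewrite E mulf_eq0 (negbTE (zn0 _)) /= zer => iZ'.
  by rewrite iZ' in iZ.
by move: (pair i (eperm t i) (ewt t i) iZ jZ); rewrite eq_sym ui E eqxx => /(_ isT).
Qed.


Lemma sum_cycles m n (w : elt m n) (F : 'I_n -> nat) :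
  (\sum_(i < n) F i = \sum_(c in cycles w) \sum_(i in c) F i)%N.
Proof.
rewrite (partition_big_imset (porbit (eperm w))) /=.
apply: eq_bigr => c /imsetP[x _ ->]; apply: eq_bigl => i.
by rewrite eq_porbit_mem.
Qed.

Lemma cycP m n (w : elt m n) c : c \in cycles w -> exists x, c = porbit (eperm w) x.
Proof. by case/imsetP => x _ ->; exists x. Qed.

Lemma cyc_in m n (w : elt m n) x : porbit (eperm w) x \in cycles w.
Proof. exact: imset_f. Qed.

Lemma sum_card m n (w : elt m n) : (\sum_(c in cycles w) #|c| = n)%N.
Proof.
have := sum_cycles w (fun _ => 1%N); rewrite sum1_card card_ord => E.
by rewrite [in RHS]E; apply: eq_bigr => c _; rewrite sum1_card.
Qed.

Lemma coprime_divg r n : (0 < gcdn r n)%N ->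
  coprime (r %/ gcdn r n) (n %/ gcdn r n).
Proof.
move=> g0; rewrite /coprime; apply/eqP.
have : (gcdn r n * gcdn (r %/ gcdn r n) (n %/ gcdn r n) = gcdn r n * 1)%N.
  rewrite muln_gcdr (mulnC _ (r %/ _)%N) (mulnC _ (n %/ _)%N).
  by rewrite !divnK ?dvdn_gcdl ?dvdn_gcdr // muln1.
by move/eqP; rewrite eqn_pmul2l // => /eqP.
Qed.


Lemma oi_i m n z (w : elt m n) (m0 : (0 < m)%N) (zp : m.-primitive_root z)
  (n0 : (0 < n)%N) (v : 'cV[algC]_n) lam :
  (forall j, lam * v (eperm w j) 0 = z ^+ ewt w j * v j 0) ->
  (forall j j' k, j != j' -> v j' 0 != z ^+ k * v j 0) ->
  (forall i, v i 0 != 0) ->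
  exists r, (0 < r)%N /\ cond_i w r.
Proof.
move=> eig H1 nz.
have [L [e [L0 e0 eL H]]] := structure m0 zp eig H1 (nz (Ordinal n0)).
set g := #|cycles w|.
have Hc c : c \in cycles w -> #|c| = L /\ (cweight w c = e %[mod m])%N.
  by case/cycP => x ->; apply: H.
have nE : n = (g * L)%N.
  rewrite -{1}(sum_card w) -sum_nat_const; apply: eq_bigr => c cc.
  by case: (Hc c cc).
have g0 : (0 < g)%N by move: n0; rewrite nE muln_gt0 => /andP[].
exists (g * e)%N; split; first by rewrite muln_gt0 g0.
have gE : gcdn (g * e) n = g.
  by rewrite nE -muln_gcdr (eqP eL) muln1.
rewrite /cond_i gE; split => // c cc.
have -> : (n %/ g = L)%N by rewrite nE mulKn.
by rewrite mulKn //; apply: Hc.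
Qed.

Lemma if_i m p n z (w : elt m n) (m0 : (0 < m)%N) (zp : m.-primitive_root z)
  (n0 : (0 < n)%N) r : (0 < r)%N -> cond_i w r -> regular z m p n w.
Proof.
move=> r0; rewrite /cond_i; set g := gcdn r n => -[cg Hc].
have g0 : (0 < g)%N by rewrite gcdn_gt0 r0.
set x0 := Ordinal n0.
have L0 : (0 < n %/ g)%N.
  by have [<- _] := Hc _ (cyc_in w x0); rewrite lt0n card_porbit_neq0.
have HZf : forall j, j \in (set0 : {set 'I_n}) -> eperm w j = j by move=> j; rewrite in_set0.
have [v [lam [eig zer pair]]] := build_ex m0 zp L0 (coprime_divg g0)
  (fun j _ => Hc _ (cyc_in w j)) HZf.
apply: (regular_of m0 zp (Z := set0) _ eig zer pair).
- by exists x0; rewrite in_set0.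
- by move=> a b; rewrite in_set0.
- by move=> t _ H i; apply: H; rewrite in_set0.
Qed.


Lemma oi_ii m n z (w : elt m n) (m0 : (0 < m)%N) (zp : m.-primitive_root z)
  (v : 'cV[algC]_n) lam x0 i0 :
  inG m m n w ->
  (forall j, lam * v (eperm w j) 0 = z ^+ ewt w j * v j 0) ->
  (forall j j' k, j != j' -> v j' 0 != z ^+ k * v j 0) ->
  v x0 0 != 0 -> v i0 0 = 0 ->
  exists r, (0 < r)%N /\ cond_ii w r.
Proof.
move=> wG eig H1 vx0 vi0.
set u := eperm w.
have zn0 : forall a, z ^+ a != 0.
  move=> a; apply: expf_neq0; apply/negP => /eqP z0.
  by move: (prim_expr_order zp); rewrite z0 expr0n gtn_eqF // => /eqP; rewrite eq_sym oner_eq0.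
have nz j : j != i0 -> v j 0 != 0.
  by move=> ji; move: (H1 i0 j 0%N); rewrite eq_sym ji vi0 mulr0 => /(_ isT).
have ui0 : u i0 = i0.
  set j := (u^-1)%g i0.
  have uj : u j = i0 by rewrite /j permKV.
  have := eig j; rewrite -/u uj vi0 mulr0 => /esym/eqP; rewrite mulf_eq0 (negbTE (zn0 _)) /=.
  case: (eqVneq j i0) => [ji _|/nz /negbTE -> //].
  by rewrite -{1}ji uj.
set c0 := porbit u i0.
have c0E : c0 = [set i0].
  apply/setP => y; rewrite inE; apply/porbitP/eqP => [[k ->]|->].
    by rewrite permX_fix.
  by exists 0%N; rewrite expg0 perm1.
have c0c : c0 \in cycles w by apply: cyc_in.
have [L [e [L0 e0 eL H]]] := structure m0 zp eig H1 vx0.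
have x0i : x0 != i0 by apply: contraNneq vx0 => ->; rewrite vi0.
have Hc c : c \in cycles w -> c != c0 -> #|c| = L /\ (cweight w c = e %[mod m])%N.
  case/cycP => x -> cc0; apply: H; apply: nz; apply: contraNneq cc0 => ->.
  by [].
set h := #|cycles w :\ c0|.
have ch : #|cycles w| = h.+1 by rewrite (cardsD1 c0) c0c.
have nE : n.-1 = (h * L)%N.
  rewrite -(sum_card w) (bigD1 c0) //= {1}c0E cards1 add1n /= -sum_nat_const.
  apply: eq_big => c; first by rewrite in_setD1 andbC.
  by move=> /andP[cc cc0]; case: (Hc c cc cc0).
have h0 : (0 < h)%N.
  apply/card_gt0P; exists (porbit u x0); rewrite in_setD1 cyc_in andbT.
  by apply/negP => /eqP E; move: (porbit_id u x0); rewrite E c0E inE (negbTE x0i).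
exists (h * e)%N; split; first by rewrite muln_gt0 h0.
have hE : gcdn (h * e) n.-1 = h by rewrite nE -muln_gcdr (eqP eL) muln1.
rewrite /cond_ii hE; split => //; exists c0 => //; split.
- by rewrite c0E cards1.
- have wE := sum_cycles w (ewt w).
  rewrite (bigD1 c0) //= in wE.
  have Ew : (\sum_(c in cycles w | c != c0) cweight w c = h * e %[mod m])%N.
    rewrite -modn_summ -[in RHS]sum_nat_const -[RHS]modn_summ.
    congr (_ %% m)%N; apply: eq_big => c; first by rewrite in_setD1 andbC.
    by move=> /andP[cc cc0]; case: (Hc c cc cc0).
  have cw0 : cweight w c0 = ewt w i0 by rewrite /cweight c0E big_set1.
  move: wG; rewrite /inG wE /dvdn => /eqP.
  move=> H0; rewrite mod0n -modnDmr -Ew modnDmr.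
  exact: H0.
- move=> c cc cc0; have [-> ->] := Hc c cc cc0.
  by rewrite nE !mulKn.
Qed.


Lemma if_ii m n z (w : elt m n) (m0 : (0 < m)%N) (zp : m.-primitive_root z)
  r : (0 < r)%N -> cond_ii w r -> regular z m m n w.
Proof.
move=> r0; rewrite /cond_ii; set h := gcdn r n.-1 => -[ch [c0 c0c [c01 c0w Hc]]].
set u := eperm w.
have [i0 c0E] := cycP c0c.
have c0s : c0 = [set i0].
  have [y cy] : exists y, c0 = [set y] by apply/cards1P; rewrite c01.
  by move: (porbit_id u i0); rewrite -c0E cy inE => /eqP ->.
have ui0 : u i0 = i0.
  by have := mem_porbit u 1 i0; rewrite expg1 -c0E c0s inE => /eqP.
have h0 : (0 < h)%N by rewrite gcdn_gt0 r0.
have : ~~ (cycles w \subset [set c0]).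
  apply/negP => /subset_leq_card; rewrite cards1 ch ltnS leqn0 => /eqP h00.
  by rewrite h00 in h0.
case/subsetPn => c cc; rewrite inE => cc0.
have [x cx] := cycP cc.
have xi : x \notin [set i0].
  by rewrite inE; apply: contraNneq cc0 => xi0; rewrite cx xi0 c0E.
have HZ : forall j, j \notin [set i0] ->
   #|porbit u j| = (n.-1 %/ h)%N /\ (cweight w (porbit u j) = r %/ h %[mod m])%N.
  move=> j jZ; apply: Hc; first exact: cyc_in.
  apply/negP => /eqP E; move: (porbit_id u j); rewrite E c0s => jZ'.
  by rewrite jZ' in jZ.
have L0 : (0 < n.-1 %/ h)%N by have [<- _] := HZ x xi; rewrite lt0n card_porbit_neq0.
have HZf : forall j, j \in [set i0] -> u j = j by move=> j; rewrite inE => /eqP ->.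
have [v [lam [eig zer pair]]] := build_ex m0 zp L0 (coprime_divg h0) HZ HZf.
apply: (regular_of m0 zp _ eig zer pair).
- by exists x.
- by move=> a b; rewrite !inE => /eqP -> /eqP ->.
move=> t tG H i.
case: (eqVneq i i0) => [->|ii]; last by apply: H; rewrite inE.
move: tG; rewrite /inG (bigD1 i0) //= big1 ?addn0; last first.
  by move=> j ji; apply: H; rewrite inE.
by rewrite /dvdn modn_small ?ltn_ord // => /eqP.
Qed.

Local Close Scope ring_scope.
Unset Implicit Arguments.
Set Strict Implicit.

Theorem mainTheorem14 (m p n : nat) (z : algC) :
  (0 < m)%N -> (0 < p)%N -> (0 < n)%N -> p %| m -> (m.-primitive_root z)%R ->
  ((p < m)%N -> forall w : elt m n, inG m p n w ->
     (regular z m p n w <-> exists r, (0 < r)%N /\ cond_i w r)) /\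
  (forall w : elt m n, inG m m n w ->
     (regular z m m n w <-> exists r, (0 < r)%N /\ (cond_i w r \/ cond_ii w r))).
Proof.
move=> m0 p0 n0 pm zp; split.
- move=> pm_lt w wG; split.
  + case=> v [lam [v0 [eigv reg]]].
    have eig := proj1 (eigenP z w v lam) eigv.
    have H1 := regular_neq m0 zp pm reg.
    have nz := regular_nz m0 zp p0 pm_lt reg.
    exact: (oi_i m0 zp n0 eig H1 nz).
  + by case=> r [r0 cr]; apply: (if_i p m0 zp n0 r0 cr).
- move=> w wG; split.
  + case=> v [lam [v0 [eigv reg]]].
    have eig := proj1 (eigenP z w v lam) eigv.
    have H1 := regular_neq m0 zp (dvdnn m) reg.
    case: (boolP [forall i, v i 0%R != 0%R]) => [/forallP nz|/forallPn [i0 /negPn /eqP vi0]].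
      by have [r [r0 c]] := oi_i m0 zp n0 eig H1 nz; exists r; split => //; left.
    have [x0 vx0] : exists x0, v x0 0%R != 0%R.
      apply/existsP; apply: contraR v0 => /existsPn H; apply/eqP/matrixP => i k.
      by rewrite (ord1 k) mxE; apply/eqP; move: (H i); rewrite negbK.
    by have [r [r0 c]] := oi_ii m0 zp wG eig H1 vx0 vi0; exists r; split => //; right.
  + case=> r [r0 [ci|cii]]; [exact: (if_i m m0 zp n0 r0 ci) | exact: (if_ii m0 zp r0 cii)].
Qed.
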